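(* Let $J$ be a set and $S_J$ the group of all permutations of $J$, acting on $\ell^\infty(J,\mathbb R)$ by $\sigma.x=x\circ\sigma^{-1}$. Then every $S_J$-invariant non-empty open convex cone in $\ell^\infty(J,\mathbb R)$ contains a constant function.
   Context: $\ell^\infty(J,\mathbb R)$ is the Banach space of bounded real functions on $J$ with the sup norm. A convex cone $W$ satisfies $W+W\subseteq W$ and $tW\subseteq W$ for all $t>0$. *)

(* Defs.v *)
From HB Require Import structures.
From mathcomp Require Import all_boot all_order all_algebra.
From mathcomp Require Import all_classical all_reals.
Set Implicit Arguments. Unset Strict Implicit. Unset Printing Implicit Defensive.
Import Order.TTheory GRing.Theory Num.Theory.
Local Open Scope classical_set_scope.
Local Open Scope ring_scope.

Definition linf_bounded (R : realType) (J : Type) (x : J -> R) : Prop :=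
  exists M : R, forall j, `|x j| <= M.

Definition linf_norm (R : realType) (J : Type) (x : J -> R) : R :=
  sup [set `|x j| | j in [set: J]].

Definition linf_open (R : realType) (J : Type) (W : set (J -> R)) : Prop :=
  (forall x, W x -> linf_bounded x) /\
  forall x, W x -> exists2 e : R, 0 < e &
    forall y, linf_bounded y -> linf_norm (fun j => y j - x j) < e -> W y.

Definition convex_cone (R : realType) (J : Type) (W : set (J -> R)) : Prop :=
  (forall x y, W x -> W y -> W (fun j => x j + y j)) /\
  (forall (t : R) x, 0 < t -> W x -> W (fun j => t * x j)).

Definition SJ_invariant (R : realType) (J : Type) (W : set (J -> R)) : Prop :=
  forall (sigma sigmainv : J -> J), cancel sigma sigmainv -> cancel sigmainv sigma ->
    forall x, W x -> W (fun j => x (sigmainv j)).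

(* Main.v *)
Require Import Defs.
From mathcomp Require Import all_boot all_order all_algebra.
From mathcomp Require Import all_classical all_reals.
From mathcomp Require Import ring lra.
Import Order.TTheory GRing.Theory Num.Theory.
Local Open Scope classical_set_scope.
Local Open Scope ring_scope.

Lemma matching_lemma (J : Type) (L : J -> bool) :
  exists sigma : J -> J, (forall j, sigma (sigma j) = j) /\
    ((forall j, L j -> ~~ L (sigma j)) \/ (forall j, ~~ L j -> L (sigma j))).
Proof.
pose P := fun G : set (J * J) => (forall p, G p -> L p.1 /\ ~~ L p.2) /\
  (forall p q, G p -> G q -> (p.1 = q.1 <-> p.2 = q.2)).
have [G [[GL Gm] Gmax]] : exists G, P G /\ forall B, G `<` B -> ~ P B.
  apply: Zorn_bigcup => F FP Ftot; split.
  - by move=> p [X FX Xp]; exact: (FP X FX).1 p Xp.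
  - move=> p q [X FX Xp] [Y FY Yq]; have [XY|YX] := Ftot X Y FX FY.
    + exact: (FP Y FY).2 p q (XY _ Xp) Yq.
    + exact: (FP X FX).2 p q Xp (YX _ Yq).
have key : (forall a, L a -> exists b, G (a, b)) \/
           (forall b, ~~ L b -> exists a, G (a, b)).
  case: (pselect (forall a, L a -> exists b, G (a, b))) => [h|h]; [by left|right].
  move/existsNP: h => [a /not_implyP [La na]] b Lb.
  apply: contrapT => nb.
  apply: (Gmax (G `|` [set (a, b)])).
    split; first by move=> p Gp; left.
    by move=> /(_ (a, b) (or_intror erefl)) Gab; apply: na; exists b.
  split.
    by move=> p [/GL//| ->]; split.
  move=> p q [Gp|->] [Gq|->].
  - exact: Gm.
  - simpl; split=> h; [exfalso; apply: na; exists p.2; rewrite -h; case: p Gp {h}=> //|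
                       exfalso; apply: nb; exists p.1; rewrite -h; case: p Gp {h} => //].
  - simpl; split=> h; [exfalso; apply: na; exists q.2; rewrite h; case: q Gq {h}=> //|
                       exfalso; apply: nb; exists q.1; rewrite h; case: q Gq {h} => //].
  - by [].
pose sigma j := match pselect (exists k, G (j, k)) with
  | left h => proj1_sig (cid h)
  | right _ => match pselect (exists k, G (k, j)) with
     | left h => proj1_sig (cid h)
     | right _ => j end end.
have s1 : forall j k, G (j, k) -> sigma j = k.
  move=> j k Gjk; rewrite /sigma; case: pselect => [h|h]; last by exfalso; apply: h; exists k.
  case: (cid h) => k' Gk' /=.
  by apply/(Gm (j, k') (j, k) Gk' Gjk).
have s2 : forall j k, G (k, j) -> sigma j = k.
  move=> j k Gkj; rewrite /sigma; case: pselect => [[k' Gk']|h].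
    by exfalso; move: (GL _ Gk').1 (GL _ Gkj).2 => /= ->.
  case: pselect => [h'|h']; last by exfalso; apply: h'; exists k.
  case: (cid h') => k' Gk' /=.
  by apply/(Gm (k', j) (k, j) Gk' Gkj).
have s3 : forall j, ~ (exists k, G (j, k)) -> ~ (exists k, G (k, j)) -> sigma j = j.
  move=> j h1 h2; rewrite /sigma.
  case: pselect => [h|_]; first by exfalso; apply: h1.
  by case: pselect => [h|_]; first by exfalso; apply: h2.
exists sigma; split.
  move=> j.
  case: (pselect (exists k, G (j, k))) => [[k Gjk]|h1].
    by rewrite (s1 _ _ Gjk) (s2 _ _ Gjk).
  case: (pselect (exists k, G (k, j))) => [[k Gkj]|h2].
    by rewrite (s2 _ _ Gkj) (s1 _ _ Gkj).
  by rewrite !s3.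
case: key => h; [left|right] => j Lj.
  by have [b Gjb] := h j Lj; rewrite (s1 _ _ Gjb); exact: (GL _ Gjb).2.
by have [a Gaj] := h j Lj; rewrite (s2 _ _ Gaj); exact: (GL _ Gaj).1.
Qed.

Lemma pow43 (R : realType) (n : nat) : 1 + n%:R / 3 <= (4 / 3 : R) ^+ n.
Proof.
elim: n => [|n IH]; first by rewrite expr0 mulr0n mul0r addr0.
rewrite exprS -natr1.
have h0 : 0 <= n%:R :> R by rewrite ler0n.
nra.
Qed.

Theorem lemma4p5 (R : realType) (J : Type) (W : set (J -> R)) :
  W !=set0 -> linf_open W -> convex_cone W -> SJ_invariant W ->
  exists c : R, W (fun _ => c).
Proof.
move=> [x Wx] [Wb Wo] [Wadd Wscale] Winv.
case: (pselect (exists j : J, True)) => [[j0 _]|nJ]; last first.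
  exists 0; have -> : (fun _ : J => 0 : R) = x.
    by apply/funext => j; exfalso; apply: nJ; exists j.
  exact: Wx.
have [e e0 He] := Wo x Wx.
have [B HB] := Wb x Wx.
pose d := e / 2.
have d0 : 0 < d by rewrite /d; lra.
pose Good (y : J -> R) := forall z : J -> R, (forall j, `|z j - y j| <= d) -> W z.
have Gx : Good x.
  move=> z hz; apply: He.
    exists (d + B) => j.
    have -> : z j = (z j - x j) + x j by ring.
    apply: (le_trans (ler_normD _ _)); exact: lerD.
  apply: (@le_lt_trans _ _ d); last by rewrite /d; lra.
  apply: ge_sup; first by exists `|z j0 - x j0|; exists j0.
  by move=> _ [j _ <-]; exact: hz.
have step : forall (y : J -> R) (sigma : J -> J), Good y ->
    (forall j, sigma (sigma j) = j) ->
    Good (fun j => (y j + y (sigma j)) / 2).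
  move=> y sigma Gy ss z hz.
  set a := fun j => (y j + y (sigma j)) / 2.
  have h1 : W (fun j => y j + (z j - a j)).
    apply: Gy => j; have -> : y j + (z j - a j) - y j = z j - a j by ring.
    exact: hz.
  have h2 : W (fun j => y (sigma j) + (z j - a j)).
    have hw : W (fun j => y j + (z (sigma j) - a (sigma j))).
      apply: Gy => j.
      have -> : y j + (z (sigma j) - a (sigma j)) - y j = z (sigma j) - a (sigma j) by ring.
      exact: hz.
    have := Winv sigma sigma ss ss _ hw.
    have -> // : (fun j => y (sigma j) + (z (sigma (sigma j)) - a (sigma (sigma j))))
        = (fun j => y (sigma j) + (z j - a j)).
    by apply/funext => j; rewrite ss.
  have hp2 : 0 < 2^-1 :> R by rewrite invr_gt0 ltr0n.
  have := Wscale (2^-1) _ hp2 (Wadd _ _ h1 h2).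
  have -> : (fun j => 2^-1 * ((y j + (z j - a j)) + (y (sigma j) + (z j - a j)))) = z.
    apply/funext => j; by rewrite /a /=; field => //.
  by [].
pose K := 2 * B.
have B0 : 0 <= B by apply: le_trans (HB j0).
have iter : forall n : nat, exists (y : J -> R) (m M : R), Good y /\
    (forall j, m <= y j <= M) /\ m <= M /\ (M - m) * (4 / 3) ^+ n <= K.
  elim=> [|n [w [lo [hi [Gw [Hw [lohi HKw]]]]]]].
    exists x, (- B), B; split => //; split.
      by move=> j; move: (HB j); rewrite ler_norml.
    by split; [lra | rewrite expr0 mulr1 /K; lra].
  have [sigma [ss [hL|hH]]] := @matching_lemma J (fun j => w j <= (lo + hi) / 2).
    exists (fun j => (w j + w (sigma j)) / 2), ((lo + (lo + hi) / 2) / 2), hi.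
    split; first exact: step.
    split.
      move=> j; have [a1 a2] := andP (Hw j); have [b1 b2] := andP (Hw (sigma j)).
      apply/andP; split; last lra.
      case: (boolP (w j <= (lo + hi) / 2)) => c.
        by move: (hL j c); rewrite -ltNge => c'; lra.
      by move: c; rewrite -ltNge => c; lra.
    split; first lra.
    rewrite exprS mulrA.
    have -> : (hi - (lo + (lo + hi) / 2) / 2) * (4 / 3) = hi - lo by field.
    exact: HKw.
  exists (fun j => (w j + w (sigma j)) / 2), lo, (((lo + hi) / 2 + hi) / 2).
  split; first exact: step.
  split.
    move=> j; have [a1 a2] := andP (Hw j); have [b1 b2] := andP (Hw (sigma j)).
    apply/andP; split; first lra.
    case: (boolP (w j <= (lo + hi) / 2)) => c; last first.
      by move: (hH j c) => /= c'; lra.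
    lra.
  split; first lra.
  rewrite exprS mulrA.
  have -> : ((lo + hi) / 2 + hi) / 2 - lo = (hi - lo) * (3 / 4) by field.
  have -> : (hi - lo) * (3 / 4) * (4 / 3) = hi - lo by field.
  exact: HKw.
have K0 : 0 <= 3 * K / d by apply: divr_ge0 => //; rewrite /K; lra.
pose n := Num.Def.archi_bound (3 * K / d).
have Hn : 3 * K / d < n%:R := archi_boundP K0.
have [y [m [M [Gy [Hy [mM HK]]]]]] := iter n.
exists (y j0); apply: Gy => j.
have [a1 a2] := andP (Hy j); have [b1 b2] := andP (Hy j0).
have hMm : M - m <= d.
  rewrite leNgt; apply/negP => hlt.
  have hp := pow43 R n.
  set N := (n%:R : R) in Hn hp.
  have N0 : 0 <= N by rewrite /N ler0n.
  have h3 : 3 * K < d * N.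
    by move: Hn; rewrite ltr_pdivrMr // => h; lra.
  have h4 : (M - m) * (1 + N / 3) <= K.
    apply: le_trans HK; apply: ler_wpM2l; lra.
  nra.
rewrite ler_norml; apply/andP; split; lra.
Qed.
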